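(* Let $1\leq p\leq\infty$, let $\mathcal{M}$ be a $\mathrm{C}^{p+1}$-manifold of dimension $n\geq1$, let $\mathcal{V}$ be a complete $\mathrm{C}^p$-vector field on $\mathcal{M}$ every integral curve of which is periodic (constant integral curves included), let $\mathcal{B}$ be a complex Banach space, and let $\lambda\in\mathbb{C}$ with $\mathrm{Re}\,\lambda\neq0$. Then for every $\epsilon\geq0$ and every $y\in\mathrm{C}^1_{\mathcal{V}}(\mathcal{M};\mathcal{B})$ satisfying $\|\mathcal{V}y-\lambda y\|_\infty\leq\epsilon$, one has $\|y\|_\infty\leq\epsilon|\mathrm{Re}\,\lambda|^{-1}$.
   Context: $\|g\|_\infty=\sup_{x\in\mathcal{M}}\|g(x)\|$. For a map $y:\mathcal{M}\to\mathcal{B}$ that is differentiable along every integral curve of $\mathcal{V}$, $\mathcal{V}y(x)=(y\circ\gamma_x)'(0)$, where $\gamma_x$ is the integral curve of $\mathcal{V}$ with $\gamma_x(0)=x$. $\mathrm{C}^1_{\mathcal{V}}(\mathcal{M};\mathcal{B})$ denotes the set of maps $y:\mathcal{M}\to\mathcal{B}$ that are continuous, differentiable along every integral curve of $\mathcal{V}$, and such that $\mathcal{V}y$ is continuous. A vector field is complete if its flow is defined on all of $\mathbb{R}\times\mathcal{M}$. *)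

(* Defs.v *)
From mathcomp Require Import all_boot all_algebra.
From mathcomp Require Import complex.
From mathcomp Require Import all_classical all_reals all_analysis.
Import numFieldNormedType.Exports.
Set Implicit Arguments. Unset Strict Implicit. Unset Printing Implicit Defensive.
Local Open Scope classical_set_scope.
Local Open Scope ring_scope.

(* The (global) flow of a complete vector field on the space M:
   phi t x = gamma_x(t), the integral curve through x evaluated at time t.
   Completeness = the flow is defined on all of R x M. *)
Definition is_global_flow (R : realType) (M : topologicalType)
  (phi : R -> M -> M) : Prop :=
  [/\ (forall x, phi 0 x = x),
      (forall s t x, phi (s + t) x = phi s (phi t x)) &
      continuous (fun p : R * M => phi p.1 p.2)].

Definition all_orbits_periodic (R : realType) (M : topologicalType)
  (phi : R -> M -> M) : Prop :=
  forall x, exists T : R, 0 < T /\ phi T x = x.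

Definition Vquot (R : realType) (M : topologicalType)
  (B : normedModType R[i]) (phi : R -> M -> M) (y : M -> B) (x : M) (t : R)
  : R -> B :=
  fun h => (Complex h^-1 0) *: (y (phi (t + h) x) - y (phi t x)).

Definition curve_derivable (R : realType) (M : topologicalType)
  (B : normedModType R[i]) (phi : R -> M -> M) (y : M -> B) (x : M) (t : R)
  : Prop :=
  cvg (Vquot phi y x t @ 0^').

(* V y (x) = (y o gamma_x)'(0) *)
Definition Vop (R : realType) (M : topologicalType)
  (B : normedModType R[i]) (phi : R -> M -> M) (y : M -> B) : M -> B :=
  fun x => lim (Vquot phi y x 0 @ 0^').

Definition C1V (R : realType) (M : topologicalType)
  (B : normedModType R[i]) (phi : R -> M -> M) (y : M -> B) : Prop :=
  [/\ continuous y,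
      (forall x t, curve_derivable phi y x t) &
      continuous (Vop phi y)].

(* Main.v *)
Require Import Defs.
From mathcomp Require Import all_boot all_order all_algebra.
From mathcomp Require Import complex.
From mathcomp Require Import all_classical all_reals all_analysis.
From mathcomp Require Import lra.
Import numFieldNormedType.Exports.
Import Order.TTheory GRing.Theory Num.Theory.
Local Open Scope classical_set_scope.
Local Open Scope ring_scope.
Local Open Scope complex_scope.

Lemma Re_le_norm (R : realType) (z : R[i]) : `|complex.Re z| <= complex.Re `|z|.
Proof. rewrite normc_def /= -sqrtr_sqr. apply: ler_wsqrtr. by rewrite lerDl sqr_ge0. Qed.

Lemma norm_realC (R : realType) (B : normedModType R[i]) (v : B) :
  `|v| = (complex.Re `|v|)%:C.
Proof. by rewrite RRe_real // ger0_real. Qed.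

Lemma normC_real (R : realType) (x : R) : `|x%:C| = `|x|%:C.
Proof. by rewrite normc_def /= expr0n addr0 sqrtr_sqr. Qed.

Lemma Re_norm_ge0 (R : realType) (B : normedModType R[i]) (v : B) :
  0 <= complex.Re `|v|.
Proof. by rewrite -ler0c -norm_realC. Qed.

Lemma grp (V : zmodType) (g0 a b c : V) : g0 + c = g0 + a - (a - b) - (b - c).
Proof. by rewrite !opprB !addrA [g0 + a + b]addrAC addrK [g0 + b + c]addrAC addrK. Qed.

Lemma core (R : realType) (B : normedModType R[i]) (l : R[i]) (h eps d : R)
  (g0 g1 q D : B) :
  g1 = g0 + h%:C *: q ->
  `|D - l *: g0| <= eps%:C -> `|D - q| < d%:C -> `|g1| <= `|g0| ->
  0 < h * complex.Re l ->
  `|complex.Re l| * complex.Re `|g0| <= eps + d.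
Proof.
move=> E Hb Hq Hg hl.
have e1 : (1 + h%:C * l) *: g0 = g1 - h%:C *: (q - D) - h%:C *: (D - l *: g0).
  rewrite E !scalerBr scalerDl scale1r scalerA.
  exact: grp.
have H1 : `|1 + h%:C * l| * `|g0| <= `|g0| + `|h|%:C * d%:C + `|h|%:C * eps%:C.
  rewrite -normrZ e1 -normC_real.
  apply: (le_trans (ler_normB _ _)); apply: lerD; last first.
    by rewrite normrZ; apply: ler_wpM2l.
  apply: (le_trans (ler_normB _ _)); apply: lerD => //.
  by rewrite normrZ; apply: ler_wpM2l => //; rewrite distrC ltW.
have H2 : (1 + h * complex.Re l)%:C <= `|1 + h%:C * l|.
  rewrite -(RRe_real (normr_real _)) lecR.
  apply: le_trans; last exact: Re_le_norm.
  have -> : complex.Re (1 + h%:C * l) = 1 + h * complex.Re l.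
    by clear; case: l => a b /=; rewrite mul0r subr0.
  exact: ler_norm.
have H3 := le_trans (ler_wpM2r (normr_ge0 g0) H2) H1.
rewrite norm_realC -!rmorphM -!rmorphD lecR in H3.
have hpos : 0 < `|h|.
  by rewrite normr_gt0; apply/eqP => h0; move: hl; rewrite h0 mul0r ltxx.
have hh : h * complex.Re l = `|h| * `|complex.Re l|.
  by rewrite -normrM gtr0_norm.
rewrite hh in H3.
rewrite -(ler_pM2l hpos).
set n := complex.Re `|g0| in H3 *.
nra.
Qed.

Lemma norm_cont (R : realType) (B : normedModType R[i]) (g : R -> B) :
  continuous g -> continuous (fun t => complex.Re `|g t|).
Proof.
move=> gc t; apply/cvgrPdist_lt => e e0.
have := gc t; move/cvgrPdist_lt/(_ e%:C); rewrite ltcR => /(_ e0).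
apply: filterS => s.
rewrite (@norm_realC _ _ (g t - g s)) ltcR; apply: le_lt_trans.
have := ler_dist_dist (g t) (g s).
by rewrite [`|g t - g s|]norm_realC [`|g t|]norm_realC [`|g s|]norm_realC -rmorphB normC_real lecR.
Qed.

Theorem corollary2p3 (R : realType) (M : topologicalType)
  (phi : R -> M -> M) (B : completeNormedModType R[i]) (l : R[i])
  (hflow : is_global_flow phi) (hper : all_orbits_periodic phi)
  (hl : complex.Re l != 0) (eps : R) (heps : 0 <= eps) (y : M -> B)
  (hy : C1V phi y)
  (hbound : forall x, `| Vop phi y x - l *: y x | <= Complex eps 0) :
  forall x, `| y x | <= Complex (eps / `| complex.Re l |) 0.
Proof.
move=> x.
case: hflow => phi0 phiD phic.
case: hy => yc yder Vc.
have [T [T0 hT]] := hper x.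
pose g t := y (phi t x).
have gper : forall t, g (t + T) = g t by move=> t; rewrite /g phiD hT.
have gc : continuous g.
  move=> t.
  apply: (@continuous_comp _ _ _ (fun s : R => phi s x) y t); last exact: yc.
  apply: (@continuous_comp _ _ _ (fun s : R => (s, x)) (fun p : R * M => phi p.1 p.2) t); last exact: phic.
  apply: (@cvg_pair R R M (nbhs t) (nbhs t) (nbhs x) _ _ _ id (fun=> x)); [exact: cvg_id | exact: cvg_cst].
pose n t := complex.Re `|g t|.
have nc : continuous n := @norm_cont _ _ g gc.
have [t0 t0in t0max] := EVT_max (ltW T0) (continuous_subspaceT (A := `[0, T]) nc).
move: t0in; rewrite in_itv /= => /andP[t00 t0T].
have nmax : forall s, -T <= s -> s <= 2 * T -> n s <= n t0.
  move=> s h1 h2.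
  have inI : forall u, 0 <= u -> u <= T -> n u <= n t0.
    by move=> u a b; apply: t0max; rewrite in_itv /= a b.
  case: (ltP s 0) => hs0.
    have -> : n s = n (s + T) by rewrite /n gper.
    apply: inI; lra.
  case: (leP s T) => hsT; first exact: inI.
  have -> : n s = n (s - T) by rewrite /n -(gper (s - T)) subrK.
  apply: inI; lra.
have qc : Vquot phi y x t0 @ 0^' --> Vop phi y (phi t0 x).
  have eqV : Vquot phi y (phi t0 x) 0 = Vquot phi y x t0.
    by apply: funext => h; rewrite /Vquot add0r phi0 -phiD (addrC h t0).
  rewrite /Vop eqV; exact: yder x t0.
have key : `|complex.Re l| * n t0 <= eps.
  apply/ler_addgt0Pr => d d0.
  move/cvgrPdist_lt: qc => /(_ d%:C); rewrite ltcR => /(_ d0).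
  move/nbhs_ballP => [e /= e0 He].
  set r := complex.Re l.
  pose m := Num.min e T / 2.
  have mn0 : 0 < Num.min e T by rewrite lt_min e0 T0.
  have mne : Num.min e T <= e by rewrite ge_min lexx.
  have mnT : Num.min e T <= T by rewrite ge_min lexx orbT.
  have m0 : 0 < m by rewrite /m; lra.
  have me : m < e by rewrite /m; lra.
  have mT : m < T by rewrite /m; lra.
  pose h := Num.sg r * m.
  have habs : `|h| = m by rewrite normrM normr_sg hl mul1r gtr0_norm.
  have hne : h != 0 by rewrite -normr_gt0 habs.
  have hpos : 0 < h * r by rewrite /h mulrAC -normrEsg mulr_gt0 // normr_gt0.
  have hball : ball 0 e h by rewrite /ball /= sub0r normrN habs.
  have Hq := He h hball hne.
  have [hlo hhi] : - m <= h /\ h <= m.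
    have : `|h| <= m by rewrite habs.
    by rewrite ler_norml => /andP[].
  apply: (@core R B l h eps d (g t0) (g (t0 + h)) (Vquot phi y x t0 h) (Vop phi y (phi t0 x))) => //.
  - rewrite /Vquot scalerA.
    have -> : h%:C * Complex h^-1 0 = 1.
      by rewrite -[Complex h^-1 0]/(h^-1)%:C -rmorphM divff // rmorph1.
    by rewrite scale1r /g [RHS]addrC subrK.
  - rewrite (@norm_realC _ _ (g (t0 + h))) (@norm_realC _ _ (g t0)) lecR.
    apply: nmax; lra.
have -> : y x = g 0 by rewrite /g phi0.
rewrite (@norm_realC _ _ (g 0)).
change ((complex.Re `|g 0|)%:C <= (eps / `|complex.Re l|)%:C); rewrite lecR.
have rpos : 0 < `|complex.Re l| by rewrite normr_gt0.
rewrite ler_pdivlMr //.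
apply: le_trans key; rewrite mulrC ler_pM2l //.
by apply: nmax; lra.
Qed.
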